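(* Suppose Assumptions 1 and 2 hold and run Algorithm 1 with any $\gamma,\alpha>0$. Then for every $t\in\{1,2,\ldots\}$, $$\|\mathbf{Q}(t)\|\le2\gamma G+\frac{\alpha R^2+2DR+2\gamma^2G^2}{\gamma\epsilon}.$$
   Context: Setting: $n,m$ positive integers; $\mathcal{X}_0\subset\mathbb{R}^n$ is a nonempty compact convex set; $\mathbf{g}=(g_1,\ldots,g_m)^{\mathsf T}:\mathbb{R}^n\to\mathbb{R}^m$ with each $g_k$ convex and continuous; $f^t$, $t=0,1,2,\ldots$, are convex differentiable real functions on (a neighborhood of) $\mathcal{X}_0$. All norms are Euclidean. Assumption 1: there are constants $D,\beta,G,R>0$ with $\|\nabla f^t(\mathbf{x})\|\le D$ for all $\mathbf{x}\in\mathcal{X}_0$ and all $t\ge0$; $\|\mathbf{g}(\mathbf{x})-\mathbf{g}(\mathbf{y})\|\le\beta\|\mathbf{x}-\mathbf{y}\|$ for all $\mathbf{x},\mathbf{y}\in\mathcal{X}_0$; $\|\mathbf{g}(\mathbf{x})\|\le G$ for all $\mathbf{x}\in\mathcal{X}_0$; $\|\mathbf{x}-\mathbf{y}\|\le R$ for all $\mathbf{x},\mathbf{y}\in\mathcal{X}_0$. Assumption 2 (Slater condition): there exist $\epsilon>0$ and $\hat{\mathbf{x}}\in\mathcal{X}_0$ with $g_k(\hat{\mathbf{x}})\le-\epsilon$ for all $k\in\{1,\ldots,m\}$. Algorithm 1 (parameters $\gamma>0,\alpha>0$): let $\tilde{\mathbf{g}}(\mathbf{x})=\gamma\mathbf{g}(\mathbf{x})$.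 Choose any $\mathbf{x}(0)\in\mathcal{X}_0$ and set $Q_k(0)=0$ for all $k$. For each $t=0,1,2,\ldots$: set $Q_k(t+1)=\max\{-\tilde g_k(\mathbf{x}(t)),\,Q_k(t)+\tilde g_k(\mathbf{x}(t))\}$ for $k=1,\ldots,m$, and let $\mathbf{x}(t+1)$ be a minimizer over $\mathbf{x}\in\mathcal{X}_0$ of $[\nabla f^t(\mathbf{x}(t))]^{\mathsf T}(\mathbf{x}-\mathbf{x}(t))+[\mathbf{Q}(t+1)+\tilde{\mathbf{g}}(\mathbf{x}(t))]^{\mathsf T}\tilde{\mathbf{g}}(\mathbf{x})+\alpha\|\mathbf{x}-\mathbf{x}(t)\|^2$, where $\mathbf{Q}(t)=(Q_1(t),\ldots,Q_m(t))^{\mathsf T}$. *)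

(* Defs.v *)
(* classical reals.
   Vectors of R^n are encoded as functions nat -> R that vanish at indices >= n
   ("padded" vectors); all norms/inner products only read indices < n. *)
From Stdlib Require Import Reals.
Open Scope R_scope.

Definition vec := nat -> R.

Fixpoint sumn (n : nat) (f : nat -> R) : R :=
  match n with O => 0 | S k => sumn k f + f k end.

Definition dot (n : nat) (x y : vec) : R := sumn n (fun i => x i * y i).
Definition norm (n : nat) (x : vec) : R := sqrt (dot n x x).

Definition vadd (x y : vec) : vec := fun i => x i + y i.
Definition vsub (x y : vec) : vec := fun i => x i - y i.
Definition vscale (a : R) (x : vec) : vec := fun i => a * x i.

Definition padded (n : nat) (x : vec) : Prop := forall i, (n <= i)%nat -> x i = 0.

Definition in_Rn (n : nat) (S : vec -> Prop) : Prop := forall x, S x -> padded n x.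

Definition convex_set (S : vec -> Prop) : Prop :=
  forall x y l, S x -> S y -> 0 <= l <= 1 ->
    S (vadd (vscale l x) (vscale (1 - l) y)).

Definition bounded_Rn (n : nat) (S : vec -> Prop) : Prop :=
  exists B, forall x, S x -> norm n x <= B.

Definition closed_Rn (n : nat) (S : vec -> Prop) : Prop :=
  forall (u : nat -> vec) (y : vec), padded n y -> (forall k, S (u k)) ->
    (forall eps, eps > 0 -> exists N, forall k, (k >= N)%nat -> norm n (vsub (u k) y) < eps) ->
    S y.

Definition compact_Rn (n : nat) (S : vec -> Prop) : Prop :=
  bounded_Rn n S /\ closed_Rn n S.

Definition open_Rn (n : nat) (U : vec -> Prop) : Prop :=
  forall x, U x -> exists r, r > 0 /\
    forall y, padded n y -> norm n (vsub y x) < r -> U y.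

Definition convex_fun_on (S : vec -> Prop) (f : vec -> R) : Prop :=
  forall x y l, S x -> S y -> 0 <= l <= 1 ->
    f (vadd (vscale l x) (vscale (1 - l) y)) <= l * f x + (1 - l) * f y.

Definition continuous_Rn (n : nat) (f : vec -> R) : Prop :=
  forall x, padded n x -> forall eps, eps > 0 -> exists delta, delta > 0 /\
    forall y, padded n y -> norm n (vsub y x) < delta -> Rabs (f y - f x) < eps.

Definition has_gradient (n : nat) (f : vec -> R) (x gx : vec) : Prop :=
  padded n gx /\
  forall eps, eps > 0 -> exists delta, delta > 0 /\
    forall h, padded n h -> norm n h < delta ->
      Rabs (f (vadd x h) - f x - dot n gx h) <= eps * norm n h.

Fixpoint Qseq (m : nat) (gamma : R) (g : vec -> vec) (x : nat -> vec) (t : nat) : vec :=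
  match t with
  | O => fun _ => 0
  | S s => fun k =>
      if Nat.ltb k m then
        Rmax (- (gamma * g (x s) k)) (Qseq m gamma g x s k + gamma * g (x s) k)
      else 0
  end.

Definition alg_obj (n m : nat) (gamma alpha : R) (g : vec -> vec)
  (grad : nat -> vec -> vec) (x : nat -> vec) (t : nat) (y : vec) : R :=
  dot n (grad t (x t)) (vsub y (x t))
  + dot m (vadd (Qseq m gamma g x (S t)) (vscale gamma (g (x t)))) (vscale gamma (g y))
  + alpha * (norm n (vsub y (x t))) ^ 2.

(* Main.v *)
Require Import Defs.
From Stdlib Require Import Reals Lra Lia Psatz.
Open Scope R_scope.

Lemma sumn_ext n f g : (forall i, (i < n)%nat -> f i = g i) -> sumn n f = sumn n g.
Proof. induction n; simpl; intros H; auto. rewrite IHn by (intros; apply H; lia). rewrite H by lia. auto. Qed.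

Lemma sumn_le n f g : (forall i, (i < n)%nat -> f i <= g i) -> sumn n f <= sumn n g.
Proof. induction n; simpl; intros H; [lra|]. apply Rplus_le_compat; [apply IHn; intros; apply H; lia| apply H; lia]. Qed.

Lemma sumn_add n f g : sumn n (fun i => f i + g i) = sumn n f + sumn n g.
Proof. induction n; simpl; [ring| rewrite IHn; ring]. Qed.

Lemma sumn_scal n c f : sumn n (fun i => c * f i) = c * sumn n f.
Proof. induction n; simpl; [ring| rewrite IHn; ring]. Qed.

Lemma sumn_nonneg n f : (forall i, (i < n)%nat -> 0 <= f i) -> 0 <= sumn n f.
Proof. induction n; simpl; intros H; [lra|]. pose proof (H n ltac:(lia)). pose proof (IHn ltac:(intros; apply H; lia)). lra. Qed.

Lemma sumn_sq_le n f : (forall i, (i < n)%nat -> 0 <= f i) ->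
  sumn n (fun i => f i * f i) <= sumn n f * sumn n f.
Proof.
  induction n; simpl; intros H; [lra|].
  pose proof (H n ltac:(lia)). pose proof (IHn ltac:(intros; apply H; lia)).
  pose proof (sumn_nonneg n f ltac:(intros; apply H; lia)). nra.
Qed.

Lemma dot_nonneg n x : 0 <= dot n x x.
Proof. unfold dot. apply sumn_nonneg. intros. nra. Qed.

Lemma norm_nonneg n x : 0 <= norm n x.
Proof. unfold norm. apply sqrt_pos. Qed.

Lemma norm_sq n x : norm n x * norm n x = dot n x x.
Proof. unfold norm. apply sqrt_sqrt, dot_nonneg. Qed.

Lemma dot_quad n x y t : dot n (vadd x (vscale t y)) (vadd x (vscale t y)) =
  dot n x x + 2 * t * dot n x y + t ^ 2 * dot n y y.
Proof.
  unfold dot, vadd, vscale.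
  rewrite (sumn_ext n _ (fun i => (x i * x i + (2*t) * (x i * y i)) + t^2 * (y i * y i)))
    by (intros; ring).
  rewrite sumn_add, sumn_add, !sumn_scal. ring.
Qed.

Lemma cs_sq n x y : dot n x y * dot n x y <= dot n x x * dot n y y.
Proof.
  set (A := dot n x x). set (B := dot n y y). set (C := dot n x y).
  assert (Hq : forall t, 0 <= A + 2 * t * C + t ^ 2 * B).
  { intros t. unfold A, B, C. rewrite <- dot_quad. apply dot_nonneg. }
  assert (HA : 0 <= A) by apply dot_nonneg. assert (HB : 0 <= B) by apply dot_nonneg.
  destruct (Rlt_dec 0 B) as [Hb|Hb].
  - specialize (Hq (- C / B)).
    assert (E : A + 2 * (- C / B) * C + (- C / B) ^ 2 * B = A - C * C / B) by (field; lra).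
    rewrite E in Hq.
    assert (E2 : C * C / B * B = C * C) by (field; lra). nra.
  - assert (B = 0) by lra.
    destruct (Req_dec C 0) as [Hc|Hc].
    + rewrite Hc. nra.
    + specialize (Hq (- (A + 1) / (2 * C))).
      assert (E : A + 2 * (- (A + 1) / (2 * C)) * C + (- (A + 1) / (2 * C)) ^ 2 * B = -1).
      { rewrite H. field. auto. }
      lra.
Qed.

Lemma cs n x y : Rabs (dot n x y) <= norm n x * norm n y.
Proof.
  unfold norm. rewrite <- sqrt_mult by apply dot_nonneg.
  rewrite <- sqrt_Rsqr_abs. apply sqrt_le_1_alt. unfold Rsqr. apply cs_sq.
Qed.

Lemma norm_le_of_dot n x y : dot n x x <= dot n y y -> norm n x <= norm n y.
Proof. intros. unfold norm. apply sqrt_le_1_alt. auto. Qed.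

Lemma norm_ext n x y : (forall i, (i < n)%nat -> x i = y i) -> norm n x = norm n y.
Proof. intros H. unfold norm, dot. f_equal. apply sumn_ext. intros. rewrite H; auto. Qed.

Lemma triangle n x y : norm n (vadd x y) <= norm n x + norm n y.
Proof.
  assert (E : norm n (vadd x y) = norm n (vadd x (vscale 1 y))).
  { apply norm_ext. intros. unfold vadd, vscale. ring. }
  rewrite E.
  pose proof (cs n x y). pose proof (Rle_abs (dot n x y)).
  pose proof (norm_nonneg n x). pose proof (norm_nonneg n y).
  pose proof (norm_nonneg n (vadd x (vscale 1 y))).
  pose proof (norm_sq n x). pose proof (norm_sq n y).
  pose proof (norm_sq n (vadd x (vscale 1 y))).
  rewrite dot_quad in H6. nra.
Qed.

Lemma norm_scale n c x : norm n (vscale c x) = Rabs c * norm n x.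
Proof.
  unfold norm. assert (E : dot n (vscale c x) (vscale c x) = (c * c) * dot n x x).
  { unfold dot, vscale. rewrite <- sumn_scal. apply sumn_ext. intros. ring. }
  rewrite E, sqrt_mult_alt. f_equal. apply sqrt_Rsqr_abs. nra.
Qed.

Lemma norm_le_sum n x : (forall i, (i < n)%nat -> 0 <= x i) -> norm n x <= sumn n x.
Proof.
  intros H. unfold norm, dot. rewrite <- (sqrt_Rsqr (sumn n x)) by (apply sumn_nonneg; auto).
  apply sqrt_le_1_alt. unfold Rsqr. apply sumn_sq_le. auto.
Qed.

Lemma Rabs_sq c : Rabs c * Rabs c = c * c.
Proof. unfold Rabs. destruct Rcase_abs; ring. Qed.

Lemma rmax_sq q c : 0 <= q -> Rmax (- c) (q + c) * Rmax (- c) (q + c) <= (q + Rabs c) * (q + Rabs c).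
Proof.
  intros. unfold Rmax. pose proof (Rle_abs c). pose proof (Rle_abs (-c)). rewrite Rabs_Ropp in H1.
  destruct Rle_dec; nra.
Qed.

Lemma rmax_drift q c : 0 <= q -> Rmax (- c) (q + c) * Rmax (- c) (q + c) <= q * q + 2 * (q * c) + 2 * (c * c).
Proof. intros. pose proof (Rle_0_sqr (q + c)). unfold Rsqr in *. unfold Rmax. destruct Rle_dec; nra. Qed.

Lemma Qseq_S m gamma g x s k : (k < m)%nat ->
  Qseq m gamma g x (S s) k = Rmax (- (gamma * g (x s) k)) (Qseq m gamma g x s k + gamma * g (x s) k).
Proof. intros H. simpl. rewrite (proj2 (Nat.ltb_lt k m) H). reflexivity. Qed.

Lemma Qseq_nonneg m gamma g x t k : 0 <= Qseq m gamma g x t k.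
Proof.
  revert k. induction t; intros k; simpl; [lra|].
  destruct (Nat.ltb k m); [|lra].
  pose proof (Rmax_l (- (gamma * g (x t) k)) (Qseq m gamma g x t k + gamma * g (x t) k)).
  pose proof (Rmax_r (- (gamma * g (x t) k)) (Qseq m gamma g x t k + gamma * g (x t) k)).
  pose proof (IHt k). lra.
Qed.
Theorem corollary2
  (n m : nat) (Hn : (0 < n)%nat) (Hm : (0 < m)%nat)
  (X0 : vec -> Prop)
  (HX0Rn : in_Rn n X0) (HX0ne : exists x, X0 x)
  (HX0cvx : convex_set X0) (HX0cpt : compact_Rn n X0)
  (g : vec -> vec)
  (Hgcvx : forall k, (k < m)%nat ->
      convex_fun_on (padded n) (fun x => g x k))
  (Hgcont : forall k, (k < m)%nat -> continuous_Rn n (fun x => g x k))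
  (f : nat -> vec -> R) (grad : nat -> vec -> vec)
  (U : vec -> Prop) (HUopen : open_Rn n U) (HUsub : in_Rn n U)
  (HX0U : forall x, X0 x -> U x)
  (Hfcvx : forall t, convex_fun_on X0 (f t))
  (Hgrad : forall t x, U x -> has_gradient n (f t) x (grad t x))
  (D beta G Rd eps : R) (HD : D > 0) (Hbeta : beta > 0) (HG : G > 0) (HRd : Rd > 0)
  (Hgradb : forall t x, X0 x -> norm n (grad t x) <= D)
  (Hlip : forall x y, X0 x -> X0 y -> norm m (vsub (g x) (g y)) <= beta * norm n (vsub x y))
  (HgG : forall x, X0 x -> norm m (g x) <= G)
  (Hdiam : forall x y, X0 x -> X0 y -> norm n (vsub x y) <= Rd)
  (Heps : eps > 0)
  (Hslater : exists xh, X0 xh /\ forall k, (k < m)%nat -> g xh k <= - eps)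
  (gamma alpha : R) (Hgamma : gamma > 0) (Halpha : alpha > 0)
  (x : nat -> vec)
  (Hx0 : X0 (x O))
  (Hxmin : forall t, X0 (x (S t)) /\
      forall y, X0 y ->
        alg_obj n m gamma alpha g grad x t (x (S t)) <= alg_obj n m gamma alpha g grad x t y) :
  forall t, (1 <= t)%nat ->
    norm m (Qseq m gamma g x t) <=
      2 * gamma * G + (alpha * Rd ^ 2 + 2 * D * Rd + 2 * gamma ^ 2 * G ^ 2) / (gamma * eps).
Proof.
  intros t Ht.
  destruct Hslater as [xh [Hxh Hsl]].
  set (C := alpha * Rd ^ 2 + 2 * D * Rd + 2 * gamma ^ 2 * G ^ 2).
  assert (HC : 0 < C) by (unfold C; nra).
  assert (HCg : 0 <= C / (gamma * eps)).
  { apply Rlt_le, Rdiv_lt_0_compat; nra. }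
  assert (Hxin : forall s, X0 (x s)).
  { intros s; destruct s; [exact Hx0| apply (proj1 (Hxmin s))]. }
  set (Q := Qseq m gamma g x).
  assert (Hgs : forall s, norm m (vscale gamma (g (x s))) <= gamma * G).
  { intros s. rewrite norm_scale, Rabs_pos_eq by lra. pose proof (HgG _ (Hxin s)). nra. }
  assert (Hbase : norm m (Q 1%nat) <= gamma * G).
  { eapply Rle_trans; [|apply (Hgs O)]. apply Req_le. unfold norm. f_equal.
    unfold dot. apply sumn_ext. intros i Hi. unfold Q. rewrite Qseq_S by auto.
    simpl Qseq. unfold vscale. rewrite Rplus_0_l.
    unfold Rmax. destruct Rle_dec; ring. }
  assert (Hstep : forall s,
     (norm m (Q (S (S s))) <= norm m (Q (S s)) + gamma * G) /\
     (gamma * G + C / (gamma * eps) <= norm m (Q (S s)) -> norm m (Q (S (S s))) <= norm m (Q (S s)))).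
  { intros s.
    set (Q1 := Q (S s)). set (Q2 := Q (S (S s))).
    set (a := g (x s)). set (b := g (x (S s))).
    set (W := vadd Q1 (vscale gamma a)).
    assert (HQ2 : forall k, (k < m)%nat -> Q2 k = Rmax (- (gamma * b k)) (Q1 k + gamma * b k)).
    { intros k Hk. unfold Q2, Q. rewrite Qseq_S by auto. reflexivity. }
    assert (HQ1nn : forall k, 0 <= Q1 k) by (intros; apply Qseq_nonneg).
    assert (HWnn : forall k, (k < m)%nat -> 0 <= W k).
    { intros k Hk. unfold W, vadd, vscale, Q1, Q. rewrite Qseq_S by auto.
      pose proof (Rmax_l (- (gamma * g (x s) k)) (Qseq m gamma g x s k + gamma * g (x s) k)).
      unfold a. lra. }
    pose proof (norm_nonneg m Q1) as HN1. pose proof (norm_nonneg m Q2) as HN2.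
    pose proof (norm_sq m Q1) as HS1. pose proof (norm_sq m Q2) as HS2.
    pose proof (Hgs (S s)) as Hb. pose proof (Hgs s) as Ha. fold a b in Ha, Hb.
    split.
    -
      set (v := fun k => Rabs (gamma * b k)).
      assert (H1 : norm m Q2 <= norm m (vadd Q1 v)).
      { apply norm_le_of_dot. unfold dot. apply sumn_le. intros k Hk.
        rewrite HQ2 by auto. unfold vadd, v. apply rmax_sq. auto. }
      assert (H2 : norm m v = norm m (vscale gamma b)).
      { unfold norm, dot. f_equal. apply sumn_ext. intros. unfold v, vscale. apply Rabs_sq. }
      pose proof (triangle m Q1 v). lra.
    - intros Hth.
      assert (Hdr : dot m Q2 Q2 <= dot m Q1 Q1 + 2 * dot m Q1 (vscale gamma b)
                     + 2 * dot m (vscale gamma b) (vscale gamma b)).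
      { unfold dot. rewrite <- !sumn_scal, <- !sumn_add. apply sumn_le. intros k Hk.
        rewrite HQ2 by auto. unfold vscale. apply rmax_drift. auto. }
      assert (HWd : dot m W (vscale gamma b) = dot m Q1 (vscale gamma b) + dot m (vscale gamma a) (vscale gamma b)).
      { unfold dot. rewrite <- sumn_add. apply sumn_ext. intros. unfold W, vadd. ring. }
      assert (Hab : - (gamma * G * (gamma * G)) <= dot m (vscale gamma a) (vscale gamma b)).
      { pose proof (cs m (vscale gamma a) (vscale gamma b)).
        pose proof (Rle_abs (- dot m (vscale gamma a) (vscale gamma b))). rewrite Rabs_Ropp in H0.
        pose proof (norm_nonneg m (vscale gamma a)). pose proof (norm_nonneg m (vscale gamma b)).
        assert (norm m (vscale gamma a) * norm m (vscale gamma b) <= gamma * G * (gamma * G)).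
        { apply Rmult_le_compat; auto. }
        lra. }
      assert (Hbb : dot m (vscale gamma b) (vscale gamma b) <= gamma * G * (gamma * G)).
      { rewrite <- norm_sq. pose proof (norm_nonneg m (vscale gamma b)). apply Rmult_le_compat; auto. }
      destruct (Hxmin s) as [_ Hmin]. specialize (Hmin xh Hxh). unfold alg_obj in Hmin.
      fold Q Q1 a b W in Hmin. change (Q (S s)) with Q1 in Hmin. fold W in Hmin.
      assert (Hg1 : - (D * Rd) <= dot n (grad s (x s)) (vsub (x (S s)) (x s))).
      { pose proof (cs n (grad s (x s)) (vsub (x (S s)) (x s))).
        pose proof (Rle_abs (- dot n (grad s (x s)) (vsub (x (S s)) (x s)))). rewrite Rabs_Ropp in H0.
        pose proof (Hgradb s _ (Hxin s)). pose proof (Hdiam _ _ (Hxin (S s)) (Hxin s)).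
        pose proof (norm_nonneg n (grad s (x s))). pose proof (norm_nonneg n (vsub (x (S s)) (x s))).
        assert (norm n (grad s (x s)) * norm n (vsub (x (S s)) (x s)) <= D * Rd) by (apply Rmult_le_compat; auto).
        lra. }
      assert (Hg2 : dot n (grad s (x s)) (vsub xh (x s)) <= D * Rd).
      { pose proof (cs n (grad s (x s)) (vsub xh (x s))).
        pose proof (Rle_abs (dot n (grad s (x s)) (vsub xh (x s)))).
        pose proof (Hgradb s _ (Hxin s)). pose proof (Hdiam _ _ Hxh (Hxin s)).
        pose proof (norm_nonneg n (grad s (x s))). pose proof (norm_nonneg n (vsub xh (x s))).
        assert (norm n (grad s (x s)) * norm n (vsub xh (x s)) <= D * Rd) by (apply Rmult_le_compat; auto).
        lra. }
      assert (Hq1 : 0 <= alpha * norm n (vsub (x (S s)) (x s)) ^ 2).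
      { pose proof (norm_nonneg n (vsub (x (S s)) (x s))). nra. }
      assert (Hq2 : alpha * norm n (vsub xh (x s)) ^ 2 <= alpha * Rd ^ 2).
      { pose proof (norm_nonneg n (vsub xh (x s))). pose proof (Hdiam _ _ Hxh (Hxin s)).
        apply Rmult_le_compat_l; [lra|]. simpl. rewrite !Rmult_1_r. apply Rmult_le_compat; auto. }
      assert (Hsl2 : dot m W (vscale gamma (g xh)) <= - (gamma * eps) * sumn m W).
      { unfold dot. rewrite <- sumn_scal. apply sumn_le. intros k Hk. unfold vscale.
        pose proof (Hsl k Hk). pose proof (HWnn k Hk). assert (0 <= W k * gamma) by nra. nra. }
      assert (HWs : norm m W <= sumn m W) by (apply norm_le_sum; auto).
      assert (HWQ : norm m Q1 <= norm m W + gamma * G).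
      { assert (E : norm m Q1 = norm m (vadd W (vscale (-1) (vscale gamma a)))).
        { apply norm_ext. intros. unfold W, vadd, vscale. ring. }
        rewrite E. eapply Rle_trans; [apply triangle|]. rewrite norm_scale.
        assert (Ea : Rabs (-1) = 1) by (unfold Rabs; destruct Rcase_abs; lra). rewrite Ea. lra. }
      assert (Hge : C / (gamma * eps) <= sumn m W) by lra.
      assert (Hge2 : C <= gamma * eps * sumn m W).
      { apply Rmult_le_compat_l with (r := gamma * eps) in Hge; [|nra].
        unfold Rdiv in Hge. rewrite (Rmult_comm C), <- Rmult_assoc, Rinv_r, Rmult_1_l in Hge; nra. }
      assert (Hfin : dot m Q2 Q2 <= dot m Q1 Q1).
      { unfold C in *. lra. }
      rewrite <- HS1, <- HS2 in Hfin. nra. }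
  assert (Hall : forall s, norm m (Q (S s)) <= 2 * gamma * G + C / (gamma * eps)).
  { induction s.
    - assert (0 < gamma * G) by nra. lra.
    - destruct (Hstep s) as [H1 H2].
      destruct (Rle_dec (gamma * G + C / (gamma * eps)) (norm m (Q (S s)))).
      + specialize (H2 r). lra.
      + lra. }
  destruct t as [|s]; [lia|]. apply (Hall s).
Qed.
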